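(* Let $\alpha\in(0,1)\cup(1,\infty)$, let $\omega_{ABE}$ be a state on a finite-dimensional $\mathcal{H}_A\otimes\mathcal{H}_B\otimes\mathcal{H}_E$, and let $\sigma_{A_1}$, $\tau_{B_1}$, $\gamma_{E_1}$ be states on finite-dimensional Hilbert spaces. Let $\rho_{AA_1BB_1EE_1}=\omega_{ABE}\otimes\sigma_{A_1}\otimes\tau_{B_1}\otimes\gamma_{E_1}$. Then $$I_\alpha(AA_1;BB_1|EE_1)_\rho=I_\alpha(A;B|E)_\omega.$$
   Context: $\log$ is natural. For a positive semi-definite $M$ and function $f$, $f(M)$ applies $f$ only to nonzero eigenvalues (negative powers are generalized inverses on the support). For a state $\rho_{ABE}$ and $\alpha\in(0,1)\cup(1,\infty)$, the Rényi conditional mutual information is $$I_\alpha(A;B|E)_\rho=\frac{\alpha}{\alpha-1}\log\mathrm{Tr}\Big\{\Big(\rho_E^{(\alpha-1)/2}\,\mathrm{Tr}_A\big\{\rho_{AE}^{(1-\alpha)/2}\rho_{ABE}^{\alpha}\rho_{AE}^{(1-\alpha)/2}\big\}\,\rho_E^{(\alpha-1)/2}\Big)^{1/\alpha}\Big\},$$ with $\rho_{AE},\rho_E$ marginals; for composite systems (e.g. $AA_1$) the same formula applies with the composite system in place of the single one. *)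

(* Defs.v *)
From HB Require Import structures.
From Stdlib Require Import ClassicalEpsilon.
From mathcomp Require Import all_boot all_order all_algebra.
From mathcomp Require Import complex mxtens.
From mathcomp Require Import reals exp.

Set Implicit Arguments.
Unset Strict Implicit.
Unset Printing Implicit Defensive.

Import Order.TTheory GRing.Theory Num.Theory.
Local Open Scope ring_scope.

Section QInfo.
Variable R : realType.
Local Notation C := R[i].

Definition adj {m n} (M : 'M[C]_(m, n)) : 'M[C]_(n, m) := map_mx (@conjc R) M^T.

Definition unitary {n} (U : 'M[C]_n) : bool := U *m adj U == 1%:M.

Definition psd {n} (M : 'M[C]_n) : Prop :=
  adj M = M /\ forall v : 'cV[C]_n, 0 <= (adj v *m M *m v) 0 0.

Definition is_state {n} (M : 'M[C]_n) : Prop := psd M /\ \tr M = 1.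

Definition spectral_dec {n} (M : 'M[C]_n) (p : 'M[C]_n * 'rV[R]_n) : Prop :=
  unitary p.1 /\ M = p.1 *m diag_mx (map_mx (fun x : R => x%:C%C) p.2) *m adj p.1.

(* functional calculus for (Hermitian) M: f applied to the eigenvalues,
   through a (chosen) spectral decomposition; independent of the choice. *)
Definition mfun {n} (f : R -> R) (M : 'M[C]_n) : 'M[C]_n :=
  let p := epsilon (inhabits (1%:M, 0)) (spectral_dec M) in
  p.1 *m diag_mx (map_mx (fun x : R => (f x)%:C%C) p.2) *m adj p.1.

(* M^p applied only on nonzero eigenvalues (generalized inverse for p < 0) *)
Definition mpow {n} (M : 'M[C]_n) (p : R) : 'M[C]_n :=
  mfun (fun x => if x == 0 then 0 else powR x p) M.

Definition idx2 {m n} (i : 'I_m) (j : 'I_n) : 'I_(m * n) := mxtens_index (i, j).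
Definition idx3 {dA dB dE} (a : 'I_dA) (b : 'I_dB) (e : 'I_dE) : 'I_(dA * dB * dE) :=
  idx2 (idx2 a b) e.
Definition fst2 {m n} (k : 'I_(m * n)) : 'I_m := (mxtens_unindex k).1.
Definition snd2 {m n} (k : 'I_(m * n)) : 'I_n := (mxtens_unindex k).2.

Section Tri.
Variables dA dB dE : nat.

Definition ptrB (M : 'M[C]_(dA * dB * dE)) : 'M[C]_(dA * dE) :=
  \matrix_(i, j) \sum_(b < dB) M (idx3 (fst2 i) b (snd2 i)) (idx3 (fst2 j) b (snd2 j)).

Definition ptrA_AE (M : 'M[C]_(dA * dE)) : 'M[C]_dE :=
  \matrix_(i, j) \sum_(a < dA) M (idx2 a i) (idx2 a j).

Definition ptrA (M : 'M[C]_(dA * dB * dE)) : 'M[C]_(dB * dE) :=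
  \matrix_(i, j) \sum_(a < dA) M (idx3 a (fst2 i) (snd2 i)) (idx3 a (fst2 j) (snd2 j)).

(* X_AE (x) 1_B on ABE *)
Definition liftAE (X : 'M[C]_(dA * dE)) : 'M[C]_(dA * dB * dE) :=
  \matrix_(i, j) ((snd2 (fst2 i) == snd2 (fst2 j))%:R *
                  X (idx2 (fst2 (fst2 i)) (snd2 i)) (idx2 (fst2 (fst2 j)) (snd2 j))).

Definition liftE (Z : 'M[C]_dE) : 'M[C]_(dB * dE) :=
  \matrix_(i, j) ((fst2 i == fst2 j)%:R * Z (snd2 i) (snd2 j)).

Definition renyi_cmi (alpha : R) (rho : 'M[C]_(dA * dB * dE)) : R :=
  let rhoAE := ptrB rho in
  let rhoE := ptrA_AE rhoAE in
  let X := liftAE (mpow rhoAE ((1 - alpha) / 2)) in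
  let inner := ptrA (X *m mpow rho alpha *m X) in
  let Y := liftE (mpow rhoE ((alpha - 1) / 2)) in
  alpha / (alpha - 1) * ln (complex.Re (\tr (mpow (Y *m inner *m Y) (alpha^-1)))).
End Tri.

(* rho_{A A1 B B1 E E1} = omega_ABE (x) sigma_A1 (x) tau_B1 (x) gamma_E1,
   with subsystems regrouped as (A A1), (B B1), (E E1). *)
Definition prod_state {dA dB dE dA1 dB1 dE1 : nat}
  (omega : 'M[C]_(dA * dB * dE)) (sigma : 'M[C]_dA1) (tau : 'M[C]_dB1)
  (gamma : 'M[C]_dE1) : 'M[C]_((dA * dA1) * (dB * dB1) * (dE * dE1)) :=
  \matrix_(i, j)
    (let aa1 := fst2 (fst2 i) in let bb1 := snd2 (fst2 i) in let ee1 := snd2 i in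
     let aa1' := fst2 (fst2 j) in let bb1' := snd2 (fst2 j) in let ee1' := snd2 j in
     omega (idx3 (fst2 aa1) (fst2 bb1) (fst2 ee1)) (idx3 (fst2 aa1') (fst2 bb1') (fst2 ee1'))
     * sigma (snd2 aa1) (snd2 aa1') * tau (snd2 bb1) (snd2 bb1')
     * gamma (snd2 ee1) (snd2 ee1')).
End QInfo.

(* Main.v *)
Require Import Defs.
From HB Require Import structures.
From Stdlib Require Import ClassicalEpsilon.
From mathcomp Require Import all_boot all_order all_algebra.
From mathcomp Require Import complex mxtens.
From mathcomp Require Import reals exp.
From mathcomp Require Import spectral sesquilinear.
From mathcomp Require Import ring.
Set Implicit Arguments.
Unset Strict Implicit.
Unset Printing Implicit Defensive.
Import Order.TTheory GRing.Theory Num.Theory.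
Local Open Scope ring_scope.

Section L.
Variable R : realType.
Local Notation C := R[i].
Local Notation adj := (@adj R _ _).

Lemma adj_mul m n p (A : 'M[C]_(m, n)) (B : 'M[C]_(n, p)) :
  adj (A *m B) = adj B *m adj A.
Proof. by rewrite /Defs.adj trmx_mul map_mxM. Qed.

Lemma adjK m n (A : 'M[C]_(m, n)) : adj (adj A) = A.
Proof. by apply/matrixP=> i j; rewrite !mxE conjcK. Qed.

Lemma adjE m n (A : 'M[C]_(m, n)) i j : adj A i j = conjc (A j i).
Proof. by rewrite !mxE. Qed.

Lemma adj1 n : adj (1%:M : 'M[C]_n) = 1%:M.
Proof. by apply/matrixP=> i j; rewrite !mxE eq_sym; case: eqP; rewrite ?conjc1 ?conjc0. Qed.

Definition Dg n (f : R -> R) (d : 'rV[R]_n) : 'M[C]_n :=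
  diag_mx (map_mx (fun x : R => (f x)%:C%C) d).

Lemma DgE n f (d : 'rV[R]_n) i j : Dg f d i j = (f (d 0 i))%:C%C *+ (i == j).
Proof. by rewrite /Dg !mxE. Qed.

Lemma adj_Dg n f (d : 'rV[R]_n) : adj (Dg f d) = Dg f d.
Proof.
apply/matrixP=> i j; rewrite adjE !DgE eq_sym; case: eqP=> [->|_].
  by rewrite !mulr1n conjc_real. by rewrite !mulr0n conjc0.
Qed.

Lemma unitaryV n (U : 'M[C]_n) : unitary U -> adj U *m U = 1%:M.
Proof. by move=> /eqP /mulmx1C. Qed.

Lemma unitaryE n (U : 'M[C]_n) : unitary U -> U *m adj U = 1%:M.
Proof. by move=> /eqP. Qed.

Lemma spectral_dec_ex n (M : 'M[C]_n) U d :
  spectral_dec M (U, d) ->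
  spectral_dec M (epsilon (inhabits (1%:M, 0)) (spectral_dec M)).
Proof. by move=> H; apply: epsilon_spec; exists (U, d). Qed.

Lemma Dg_uniq n (U V : 'M[C]_n) d e f :
  unitary U -> unitary V ->
  U *m Dg id d *m adj U = V *m Dg id e *m adj V ->
  U *m Dg f d *m adj U = V *m Dg f e *m adj V.
Proof.
move=> uU uV E.
set W := adj V *m U.
have EW : W *m Dg id d = Dg id e *m W.
  have := congr1 (fun X => adj V *m X *m U) E.
  rewrite /W !mulmxA -!(mulmxA _ _ U) unitaryV // mulmx1.
  by rewrite unitaryV // mul1mx => ->.
have EWf : W *m Dg f d = Dg f e *m W.
  move: EW; clearbody W => EW.
  apply/matrixP=> i j; have /matrixP/(_ i j) := EW.
  rewrite /Dg !mul_mx_diag !mul_diag_mx !mxE => H.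
  have [->|Wn0] := eqVneq (W i j) 0; first by rewrite mulr0 mul0r.
  have : (d 0 j)%:C%C = (e 0 i)%:C%C.
    by apply: (mulfI Wn0); rewrite H mulrC.
  by move=> [->]; rewrite mulrC.
have EU : U = V *m W by rewrite /W mulmxA unitaryE // mul1mx.
have WW : W *m adj W = 1%:M.
  by rewrite /W adj_mul adjK mulmxA -(mulmxA _ U) unitaryE // mulmx1 unitaryV.
clearbody W; subst U.
rewrite adj_mul -!mulmxA; congr (_ *m _).
by rewrite !mulmxA EWf -(mulmxA _ W) WW mulmx1.
Qed.

Lemma spec_idE n (M : 'M[C]_n) U d : spectral_dec M (U, d) ->
  M = U *m Dg id d *m adj U.
Proof. by case. Qed.

Lemma mfunE n f (M : 'M[C]_n) U d : spectral_dec M (U, d) ->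
  mfun f M = U *m Dg f d *m adj U.
Proof.
move=> H; have := spectral_dec_ex H; rewrite /mfun.
case: (epsilon _ _) => V e [uV EV] /=.
apply: Dg_uniq => //; first by case: H.
by rewrite -(spec_idE H).
Qed.


Lemma Dg_mul n f g (d : 'rV[R]_n) : Dg f d *m Dg g d = Dg (fun x => f x * g x) d.
Proof. by rewrite /Dg mulmx_diag; congr diag_mx; apply/rowP=> j; rewrite !mxE rmorphM. Qed.

Lemma Dg_comp n f g (d : 'rV[R]_n) : Dg g (map_mx f d) = Dg (fun x => g (f x)) d.
Proof. by apply/matrixP=> i j; rewrite !DgE mxE. Qed.

Lemma Dg_ext n f g (d : 'rV[R]_n) : (forall i, f (d 0 i) = g (d 0 i)) -> Dg f d = Dg g d.
Proof. by move=> H; apply/matrixP=> i j; rewrite !DgE H. Qed.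

Lemma mfun_mul n f g (M : 'M[C]_n) U d : spectral_dec M (U, d) ->
  mfun f M *m mfun g M = mfun (fun x => f x * g x) M.
Proof.
move=> H; rewrite !(mfunE _ H); have [uU _] := H.
by rewrite -!mulmxA (mulmxA (adj U)) unitaryV // mul1mx (mulmxA (Dg f d)) Dg_mul !mulmxA.
Qed.

Lemma mfun_ext n f g (M : 'M[C]_n) U d : spectral_dec M (U, d) ->
  (forall i, f (d 0 i) = g (d 0 i)) -> mfun f M = mfun g M.
Proof. by move=> H E; rewrite !(mfunE _ H) (Dg_ext E). Qed.

Lemma mfun_id n (M : 'M[C]_n) U d : spectral_dec M (U, d) -> mfun id M = M.
Proof. by move=> H; rewrite (mfunE _ H) [in RHS](spec_idE H). Qed.

Lemma spectral_dec_mfun n f (M : 'M[C]_n) U d : spectral_dec M (U, d) ->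
  spectral_dec (mfun f M) (U, map_mx f d).
Proof.
move=> H; have [uU _] := H; split=> //=.
by rewrite (mfunE _ H) /Dg; congr (_ *m diag_mx _ *m _); apply/rowP=> j; rewrite !mxE.
Qed.

Lemma mfun_comp n f g (M : 'M[C]_n) U d : spectral_dec M (U, d) ->
  mfun g (mfun f M) = mfun (fun x => g (f x)) M.
Proof.
by move=> H; rewrite (mfunE _ (spectral_dec_mfun f H)) (mfunE _ H) Dg_comp.
Qed.

Lemma adj_mfun n f (M : 'M[C]_n) : adj (mfun f M) = mfun f M.
Proof. by rewrite /mfun !adj_mul adjK adj_Dg mulmxA. Qed.

Lemma tr_mfun n f (M : 'M[C]_n) U d : spectral_dec M (U, d) ->
  \tr (mfun f M) = \sum_i (f (d 0 i))%:C%C.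
Proof.
move=> H; have [uU _] := H; rewrite (mfunE _ H) mxtrace_mulC mulmxA unitaryV // mul1mx.
by rewrite /mxtrace; apply: eq_bigr=> i _; rewrite DgE eqxx mulr1n.
Qed.

Definition nndec n (M : 'M[C]_n) :=
  exists U d, spectral_dec M (U, d) /\ forall i, 0 <= d 0 i.

Lemma nndec_mfun n f (M : 'M[C]_n) :
  (forall x, 0 <= x -> 0 <= f x) -> nndec M -> nndec (mfun f M).
Proof.
move=> f0 [U [d [H d0]]]; exists U, (map_mx f d); split; first exact: spectral_dec_mfun.
by move=> i; rewrite mxE f0.
Qed.


Lemma fst2_idx2 m n (i : 'I_m) (j : 'I_n) : fst2 (idx2 i j) = i.
Proof. by rewrite /fst2 /idx2 mxtens_indexK. Qed.
Lemma snd2_idx2 m n (i : 'I_m) (j : 'I_n) : snd2 (idx2 i j) = j.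
Proof. by rewrite /snd2 /idx2 mxtens_indexK. Qed.
Lemma idx2K m n (k : 'I_(m * n)) : idx2 (fst2 k) (snd2 k) = k.
Proof. by rewrite /idx2 /fst2 /snd2 -surjective_pairing mxtens_unindexK. Qed.
Lemma idx2_inj m n (i i' : 'I_m) (j j' : 'I_n) :
  (idx2 i j == idx2 i' j') = (i == i') && (j == j').
Proof.
apply/eqP/andP=> [E|[/eqP-> /eqP->]] //.
have := congr1 fst2 E; have := congr1 snd2 E.
by rewrite !fst2_idx2 !snd2_idx2 => -> ->; rewrite !eqxx.
Qed.
Lemma eq_idx2 m n (k l : 'I_(m * n)) : (k == l) = (fst2 k == fst2 l) && (snd2 k == snd2 l).
Proof. by rewrite -idx2_inj !idx2K. Qed.

Lemma sum_idx2 m n (F : 'I_(m * n) -> C) :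
  \sum_k F k = \sum_i \sum_j F (idx2 i j).
Proof.
rewrite pair_big /=.
rewrite (reindex (@mxtens_index m n)) /=; last first.
  by apply: onW_bij; exists (@mxtens_unindex m n); [apply: mxtens_indexK|apply: mxtens_unindexK].
by apply: eq_bigr=> -[i j] _.
Qed.

Definition kronh N n1 n2 (h : 'I_N -> 'I_n1 * 'I_n2) (A : 'M[C]_n1) (B : 'M[C]_n2) : 'M[C]_N :=
  \matrix_(i, j) (A (h i).1 (h j).1 * B (h i).2 (h j).2).

Lemma kronhE N n1 n2 (h : 'I_N -> 'I_n1 * 'I_n2) A B i j :
  kronh h A B i j = A (h i).1 (h j).1 * B (h i).2 (h j).2.
Proof. by rewrite mxE. Qed.

Lemma sum_h N n1 n2 (h : 'I_N -> 'I_n1 * 'I_n2) (F : 'I_n1 -> 'I_n2 -> C) :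
  bijective h -> \sum_k F (h k).1 (h k).2 = \sum_i \sum_j F i j.
Proof.
move=> bh; rewrite pair_big /= (reindex h) //; exact: onW_bij.
Qed.

Lemma sum_hE N n1 n2 (h : 'I_N -> 'I_n1 * 'I_n2) (F : 'I_n1 -> 'I_n2 -> C) (G : 'I_N -> C) :
  bijective h -> (forall k, G k = F (h k).1 (h k).2) ->
  \sum_k G k = \sum_i \sum_j F i j.
Proof. by move=> bh E; rewrite -(sum_h F bh); apply: eq_bigr=> k _; rewrite E. Qed.

Lemma kronh_mul N n1 n2 (h : 'I_N -> 'I_n1 * 'I_n2) A B A' B' :
  bijective h -> kronh h A B *m kronh h A' B' = kronh h (A *m A') (B *m B').
Proof.
move=> bh; apply/matrixP=> i j; rewrite !mxE.
rewrite (sum_hE (F := fun a b => A (h i).1 a * B (h i).2 b * (A' a (h j).1 * B' b (h j).2)) bh); last by move=> k; rewrite !mxE.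
rewrite mulr_suml; apply: eq_bigr=> a _; rewrite mulr_sumr; apply: eq_bigr=> b _.
by rewrite mulrACA.
Qed.

Lemma adj_kronh N n1 n2 (h : 'I_N -> 'I_n1 * 'I_n2) A B :
  adj (kronh h A B) = kronh h (adj A) (adj B).
Proof. by apply/matrixP=> i j; rewrite !mxE rmorphM. Qed.

Lemma tr_kronh N n1 n2 (h : 'I_N -> 'I_n1 * 'I_n2) A B :
  bijective h -> \tr (kronh h A B) = \tr A * \tr B.
Proof.
move=> bh; rewrite /mxtrace.
rewrite (sum_hE (F := fun a b => A a a * B b b) bh); last by move=> k; rewrite !mxE.
by rewrite mulr_suml; apply: eq_bigr=> a _; rewrite mulr_sumr.
Qed.

Lemma kronh_1 N n1 n2 (h : 'I_N -> 'I_n1 * 'I_n2) :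
  injective h -> kronh h 1%:M 1%:M = 1%:M.
Proof.
move=> ih; apply/matrixP=> i j; rewrite !mxE -[i == j](inj_eq ih).
case: (h i) (h j) => a b [a' b'] /=; rewrite xpair_eqE.
by case: (a == a'); case: (b == b'); rewrite /= ?mulr1n ?mulr0n ?mulr1 ?mulr0.
Qed.

Lemma kronh_unitary N n1 n2 (h : 'I_N -> 'I_n1 * 'I_n2) U1 U2 :
  bijective h -> unitary U1 -> unitary U2 -> unitary (kronh h U1 U2).
Proof.
move=> bh u1 u2; apply/eqP.
rewrite adj_kronh kronh_mul // !unitaryE // kronh_1 //; exact: bij_inj.
Qed.

Lemma kronh_Dg N n1 n2 (h : 'I_N -> 'I_n1 * 'I_n2) f g F (d1 : 'rV[R]_n1) (d2 : 'rV[R]_n2)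
  (e : 'rV[R]_N) :
  injective h ->
  (forall k, F (e 0 k) = f (d1 0 (h k).1) * g (d2 0 (h k).2)) ->
  kronh h (Dg f d1) (Dg g d2) = Dg F e.
Proof.
move=> ih He; apply/matrixP=> i j; rewrite kronhE !DgE He rmorphM -[i == j](inj_eq ih).
case: (h i) (h j) => a b [a' b'] /=; rewrite xpair_eqE.
by case: (a == a'); case: (b == b'); rewrite /= ?mulr1n ?mulr0n ?mulr1 ?mulr0 ?mul0r.
Qed.

Lemma mfun_kron N n1 n2 (h : 'I_N -> 'I_n1 * 'I_n2) f A B :
  bijective h -> nndec A -> nndec B ->
  (forall x y, 0 <= x -> 0 <= y -> f (x * y) = f x * f y) ->
  mfun f (kronh h A B) = kronh h (mfun f A) (mfun f B) /\ nndec (kronh h A B).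
Proof.
move=> bh [U1 [d1 [H1 p1]]] [U2 [d2 [H2 p2]]] fM.
have ih := bij_inj bh.
set e : 'rV[R]_N := \row_k (d1 0 (h k).1 * d2 0 (h k).2).
have He : forall F, (forall x y, 0 <= x -> 0 <= y -> F (x * y) = F x * F y) ->
   kronh h (Dg F d1) (Dg F d2) = Dg F e.
  by move=> F FM; apply: kronh_Dg=> // k; rewrite mxE FM.
have [u1 E1] := H1; have [u2 E2] := H2.
have HK : spectral_dec (kronh h A B) (kronh h U1 U2, e).
  split; first exact: kronh_unitary.
  have Hid := He id (fun x y _ _ => erefl).
  rewrite /Dg /id /= in Hid.
  by rewrite /= adj_kronh E1 E2 -!kronh_mul // Hid.
split; last first.
  by exists (kronh h U1 U2), e; split=> // k; rewrite mxE mulr_ge0.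
rewrite (mfunE _ HK) (mfunE _ H1) (mfunE _ H2) adj_kronh -!kronh_mul //.
by rewrite He.
Qed.


Lemma psd_congr n m (M : 'M[C]_n) (S : 'M[C]_(n, m)) : psd M -> psd (adj S *m M *m S).
Proof.
move=> [hM pM]; split; first by rewrite !adj_mul adjK hM mulmxA.
move=> v; have := pM (S *m v).
by rewrite adj_mul !mulmxA.
Qed.

Lemma psd0 n : psd (0 : 'M[C]_n).
Proof.
split; first by apply/matrixP=> i j; rewrite !mxE conjc0.
by move=> v; rewrite mulmx0 mul0mx mxE.
Qed.

Lemma psdD n (M N : 'M[C]_n) : psd M -> psd N -> psd (M + N).
Proof.
move=> [hM pM] [hN pN]; split.
  by apply/matrixP=> i j; rewrite -[in RHS]hM -[in RHS]hN !mxE rmorphD.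
by move=> v; rewrite mulmxDr mulmxDl mxE addr_ge0.
Qed.

Lemma psd_sum n I (r : seq I) (P : pred I) (F : I -> 'M[C]_n) :
  (forall i, P i -> psd (F i)) -> psd (\sum_(i <- r | P i) F i).
Proof.
move=> H; elim/big_rec: _ => [|i x Pi px]; first exact: psd0.
exact: psdD (H _ Pi) px.
Qed.

Lemma psd_Dg n f (d : 'rV[R]_n) : (forall i, 0 <= f (d 0 i)) -> psd (Dg f d).
Proof.
move=> f0; split; first exact: adj_Dg.
move=> v; rewrite /Dg mul_mx_diag mxE /=; apply: sumr_ge0=> i _.
rewrite !mxE mulrAC [_^*%C * _]mulrC; apply: mulr_ge0; last by rewrite lecR f0.
exact: mulcJ_ge0.
Qed.

Lemma psd_mfun n f (M : 'M[C]_n) : (forall x, 0 <= f x) -> psd (mfun f M).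
Proof.
move=> f0; rewrite /mfun; set p := epsilon _ _.
rewrite -[in X in psd (X *m _ *m _)](adjK p.1).
by apply: psd_congr; apply: psd_Dg.
Qed.

Lemma nndec_psd n (M : 'M[C]_n) : nndec M -> psd M.
Proof.
move=> [U [d [H d0]]]; rewrite (spec_idE H) -[in X in psd (X *m _ *m _)](adjK U).
by apply: psd_congr; apply: psd_Dg.
Qed.


Lemma psd_nndec n (M : 'M[C]_n) : psd M -> nndec M.
Proof.
move=> [hM pM].
have herm : M \is hermsymmx.
  by apply/is_hermitianmxP; rewrite expr0 scale1r -[LHS]hM.
have /orthomx_spectralP E := hermitian_normalmx herm.
have real := hermitian_spectral_diag_real herm.
set P := spectralmx M in E; set sp := spectral_diag M in E real.
have uP : P \is unitarymx := spectral_unitarymx M.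
have PP : P *m adj P = 1%:M by apply/eqP; exact: uP.
rewrite invmx_unitary // in E.
have {}E : M = adj P *m diag_mx sp *m P by exact: E.
set d : 'rV[R]_n := map_mx (@complex.Re R) sp.
have Hsp : map_mx (fun x : R => x%:C%C) d = sp.
  apply/rowP=> j; rewrite !mxE RRe_real //; exact: (mxOverP real).
have uU : unitary (adj P) by apply/eqP; rewrite adjK; exact: mulmx1C.
have H : spectral_dec M (adj P, d) by split=> //=; rewrite adjK Hsp.
exists (adj P), d; split=> // i.
have := pM (adj P *m delta_mx i 0).
rewrite adj_mul adjK E !mulmxA -!(mulmxA _ P (adj P)) PP !mulmx1.
rewrite -mulmxA mul_diag_mx !mxE (bigD1 i) //= big1 => [|j ji]; last first.
  by rewrite !mxE (negbTE ji) /= !mulr0.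
rewrite adjE !mxE !eqxx conjc_nat mul1r addr0 mulr1.
by rewrite -{1}(RRe_real (mxOverP real 0 i)) lecR.
Qed.


Definition ptr_gen N n K (g : 'I_K -> 'I_n -> 'I_N) (M : 'M[C]_N) : 'M[C]_n :=
  \matrix_(i, j) \sum_k M (g k i) (g k j).

Lemma sum_delta_r N (F : 'I_N -> C) a : \sum_l F l * (l == a)%:R = F a.
Proof.
rewrite (bigD1 a) // big1 => [|l la]; last by rewrite (negbTE la) mulr0.
rewrite eqxx mulr1; exact: addr0.
Qed.

Lemma sum_delta_l N (F : 'I_N -> C) a : \sum_l (l == a)%:R * F l = F a.
Proof. by rewrite -[RHS](sum_delta_r F a); apply: eq_bigr=> l _; rewrite mulrC. Qed.

Lemma psd_ptr_gen N n K (g : 'I_K -> 'I_n -> 'I_N) M : psd M -> psd (ptr_gen g M).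
Proof.
move=> pM.
pose S k : 'M[C]_(N, n) := \matrix_(l, i) (l == g k i)%:R.
have -> : ptr_gen g M = \sum_k (adj (S k) *m M *m S k).
  apply/matrixP=> i j; rewrite !mxE summxE; apply: eq_bigr=> k _.
  rewrite -mulmxA mxE.
  transitivity (\sum_l (l == g k i)%:R * M l (g k j)); first by rewrite sum_delta_l.
  apply: eq_bigr => l _; rewrite adjE !mxE conjc_nat; congr (_ * _).
  rewrite (eq_bigr (fun l' => M l l' * (l' == g k j)%:R)) ?sum_delta_r //.
  by move=> l' _; rewrite mxE.
by apply: psd_sum=> k _; apply: psd_congr.
Qed.


Lemma adj_liftAE dA dB dE (X : 'M[C]_(dA * dE)) :
  adj (liftAE dB X) = liftAE dB (adj X).
Proof. by apply/matrixP=> i j; rewrite !mxE rmorphM rmorph_nat eq_sym. Qed.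

Lemma adj_liftE dB dE (Z : 'M[C]_dE) : adj (liftE dB Z) = liftE dB (adj Z).
Proof. by apply/matrixP=> i j; rewrite !mxE rmorphM rmorph_nat eq_sym. Qed.

Definition fpow (p : R) (x : R) : R := if x == 0 then 0 else x `^ p.

Lemma fpow_ge0 p x : 0 <= fpow p x.
Proof. by rewrite /fpow; case: eqP=> // _; exact: powR_ge0. Qed.

Lemma mpowE n (M : 'M[C]_n) p : mpow M p = mfun (fpow p) M.
Proof. by []. Qed.

Definition pipeZ dA dB dE (alpha : R) (rho : 'M[C]_(dA * dB * dE)) : 'M[C]_(dB * dE) :=
  let rhoAE := ptrB rho in
  let rhoE := ptrA_AE rhoAE in
  let X := liftAE dB (mpow rhoAE ((1 - alpha) / 2)) in
  let inner := ptrA (X *m mpow rho alpha *m X) in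
  let Y := liftE dB (mpow rhoE ((alpha - 1) / 2)) in
  Y *m inner *m Y.

Lemma renyiE dA dB dE alpha (rho : 'M[C]_(dA * dB * dE)) :
  renyi_cmi alpha rho =
  alpha / (alpha - 1) * ln (complex.Re (\tr (mpow (pipeZ alpha rho) alpha^-1))).
Proof. by []. Qed.

Lemma psd_pipeZ dA dB dE alpha (rho : 'M[C]_(dA * dB * dE)) : psd (pipeZ alpha rho).
Proof.
rewrite /pipeZ.
set Y := liftE _ _; set X := liftAE _ _.
have hY : adj Y = Y by rewrite /Y adj_liftE adj_mfun.
have hX : adj X = X by rewrite /X adj_liftAE adj_mfun.
rewrite -[X in X *m _ *m _]hY; apply: psd_congr.
apply: (@psd_ptr_gen _ _ _ (fun (a : 'I_dA) (i : 'I_(dB * dE)) => idx3 a (fst2 i) (snd2 i))).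
rewrite -[X in X *m _ *m _]hX; apply: psd_congr.
by apply: psd_mfun=> x; exact: fpow_ge0.
Qed.


Lemma psd_ptrB dA dB dE (M : 'M[C]_(dA * dB * dE)) : psd M -> psd (ptrB M).
Proof. exact: (@psd_ptr_gen _ _ _ (fun (b : 'I_dB) (i : 'I_(dA * dE)) => idx3 (fst2 i) b (snd2 i))). Qed.

Lemma psd_ptrA_AE dA dE (M : 'M[C]_(dA * dE)) : psd M -> psd (ptrA_AE M).
Proof. exact: (@psd_ptr_gen _ _ _ (fun (a : 'I_dA) (i : 'I_dE) => idx2 a i)). Qed.

Ltac isimp := rewrite ?/idx3; repeat first [rewrite fst2_idx2 | rewrite snd2_idx2 | rewrite idx2K].
Definition H1 m n (k : 'I_(m * n)) : 'I_m * 'I_n := (fst2 k, snd2 k).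
Definition H2 m m1 n n1 (i : 'I_((m * m1) * (n * n1))) : 'I_(m * n) * 'I_(m1 * n1) :=
  (idx2 (fst2 (fst2 i)) (fst2 (snd2 i)), idx2 (snd2 (fst2 i)) (snd2 (snd2 i))).
Definition H3 a a1 b b1 e e1 (i : 'I_((a * a1) * (b * b1) * (e * e1))) :
  'I_(a * b * e) * 'I_(a1 * b1 * e1) :=
  (idx3 (fst2 (fst2 (fst2 i))) (fst2 (snd2 (fst2 i))) (fst2 (snd2 i)),
   idx3 (snd2 (fst2 (fst2 i))) (snd2 (snd2 (fst2 i))) (snd2 (snd2 i))).
Definition h3 a b e (i : 'I_(a * b * e)) : 'I_a * 'I_(b * e) :=
  (fst2 (fst2 i), idx2 (snd2 (fst2 i)) (snd2 i)).

Lemma bij_H1 m n : bijective (@H1 m n).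
Proof.
exists (fun p => idx2 p.1 p.2); first by move=> k; rewrite /H1 /= idx2K.
by case=> x y; rewrite /H1 /= fst2_idx2 snd2_idx2.
Qed.

Lemma bij_H2 m m1 n n1 : bijective (@H2 m m1 n n1).
Proof.
exists (fun p => idx2 (idx2 (fst2 p.1) (fst2 p.2)) (idx2 (snd2 p.1) (snd2 p.2))).
  by move=> k; rewrite /H2 /=; isimp.
by case=> x y; rewrite /H2 /=; isimp.
Qed.

Lemma bij_H3 a a1 b b1 e e1 : bijective (@H3 a a1 b b1 e e1).
Proof.
exists (fun p => idx2 (idx2 (idx2 (fst2 (fst2 p.1)) (fst2 (fst2 p.2)))
                            (idx2 (snd2 (fst2 p.1)) (snd2 (fst2 p.2))))
                      (idx2 (snd2 p.1) (snd2 p.2))).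
  by move=> k; rewrite /H3 /=; isimp.
by case=> x y; rewrite /H3 /=; isimp.
Qed.

Lemma bij_h3 a b e : bijective (@h3 a b e).
Proof.
exists (fun p => idx2 (idx2 p.1 (fst2 p.2)) (snd2 p.2)).
  by move=> k; rewrite /h3 /=; isimp.
by case=> x y; rewrite /h3 /=; isimp.
Qed.


Definition prod3 a b e (S : 'M[C]_a) (T : 'M[C]_b) (G : 'M[C]_e) : 'M[C]_(a * b * e) :=
  \matrix_(i, j) (S (fst2 (fst2 i)) (fst2 (fst2 j)) * T (snd2 (fst2 i)) (snd2 (fst2 j))
                  * G (snd2 i) (snd2 j)).

Section Big.
Variables dA dB dE dA1 dB1 dE1 : nat.

Lemma B1 (W : 'M[C]_(dA * dB * dE)) S T G :
  prod_state W S T G = kronh (@H3 dA dA1 dB dB1 dE dE1) W (prod3 S T G).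
Proof.
apply/matrixP=> i j; rewrite !mxE /H3 /=; isimp.
by rewrite !mulrA.
Qed.

Lemma B2 (M : 'M[C]_(dA * dB * dE)) (N : 'M[C]_(dA1 * dB1 * dE1)) :
  ptrB (kronh (@H3 dA dA1 dB dB1 dE dE1) M N) = kronh (@H2 dA dA1 dE dE1) (ptrB M) (ptrB N).
Proof.
apply/matrixP=> i j; rewrite [LHS]mxE [RHS]mxE /H2 /= !mxE; isimp.
rewrite sum_idx2 mulr_suml; apply: eq_bigr=> b _.
rewrite mulr_sumr; apply: eq_bigr=> b1 _.
by rewrite !mxE /H3 /=; isimp.
Qed.

Lemma B3 (M : 'M[C]_(dA * dE)) (N : 'M[C]_(dA1 * dE1)) :
  ptrA_AE (kronh (@H2 dA dA1 dE dE1) M N) = kronh (@H1 dE dE1) (ptrA_AE M) (ptrA_AE N).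
Proof.
apply/matrixP=> i j; rewrite [LHS]mxE [RHS]mxE /H1 /= !mxE; isimp.
rewrite sum_idx2 mulr_suml; apply: eq_bigr=> a _.
rewrite mulr_sumr; apply: eq_bigr=> a1 _.
by rewrite !mxE /H2 /=; isimp.
Qed.

Lemma B4 (P : 'M[C]_(dA * dE)) (Q : 'M[C]_(dA1 * dE1)) :
  liftAE (dB * dB1) (kronh (@H2 dA dA1 dE dE1) P Q) =
  kronh (@H3 dA dA1 dB dB1 dE dE1) (liftAE dB P) (liftAE dB1 Q).
Proof.
apply/matrixP=> i j; rewrite !mxE /H2 /H3 /=; isimp.
rewrite eq_idx2; case: (_ == _); case: (_ == _); rewrite /= ?mul1r ?mul0r //.
by rewrite mulr0.
Qed.

Lemma B5 (M : 'M[C]_(dA * dB * dE)) (N : 'M[C]_(dA1 * dB1 * dE1)) :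
  ptrA (kronh (@H3 dA dA1 dB dB1 dE dE1) M N) = kronh (@H2 dB dB1 dE dE1) (ptrA M) (ptrA N).
Proof.
apply/matrixP=> i j; rewrite [LHS]mxE [RHS]mxE /H2 /= !mxE; isimp.
rewrite sum_idx2 mulr_suml; apply: eq_bigr=> a _.
rewrite mulr_sumr; apply: eq_bigr=> a1 _.
by rewrite !mxE /H3 /=; isimp.
Qed.

Lemma B6 (Z1 : 'M[C]_dE) (Z2 : 'M[C]_dE1) :
  liftE (dB * dB1) (kronh (@H1 dE dE1) Z1 Z2) =
  kronh (@H2 dB dB1 dE dE1) (liftE dB Z1) (liftE dB1 Z2).
Proof.
apply/matrixP=> i j; rewrite !mxE /H1 /H2 /=; isimp.
rewrite eq_idx2; case: (_ == _); case: (_ == _); rewrite /= ?mul1r ?mul0r //.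
by rewrite mulr0.
Qed.

End Big.


Section Small.
Variables a b e : nat.

Lemma T1 (S : 'M[C]_a) (T : 'M[C]_b) (G : 'M[C]_e) : \tr T = 1 ->
  ptrB (prod3 S T G) = kronh (@H1 a e) S G.
Proof.
move=> tT; apply/matrixP=> i j; rewrite !mxE /H1 /=.
rewrite -[RHS]mulr1 -tT mulr_sumr; apply: eq_bigr=> k _; rewrite !mxE; isimp.
by rewrite mulrAC.
Qed.

Lemma T2 (S : 'M[C]_a) (G : 'M[C]_e) : \tr S = 1 ->
  ptrA_AE (kronh (@H1 a e) S G) = G.
Proof.
move=> tS; apply/matrixP=> i j; rewrite !mxE.
rewrite -[RHS]mul1r -tS mulr_suml; apply: eq_bigr=> k _; rewrite !mxE /H1 /=; isimp.
by [].
Qed.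

Lemma T3 (S : 'M[C]_a) (T : 'M[C]_b) (G : 'M[C]_e) :
  prod3 S T G = kronh (@h3 a b e) S (kronh (@H1 b e) T G).
Proof. by apply/matrixP=> i j; rewrite !mxE /h3 /H1 /=; isimp; rewrite mulrA. Qed.

Lemma T4 (P : 'M[C]_a) (Q : 'M[C]_e) :
  liftAE b (kronh (@H1 a e) P Q) = kronh (@h3 a b e) P (kronh (@H1 b e) 1%:M Q).
Proof.
apply/matrixP=> i j; rewrite !mxE /h3 /H1 /=; isimp.
by rewrite mulrCA mulrA.
Qed.

Lemma T5 (P : 'M[C]_a) (Q : 'M[C]_(b * e)) :
  ptrA (kronh (@h3 a b e) P Q) = \tr P *: Q.
Proof.
apply/matrixP=> i j; rewrite !mxE mulr_suml; apply: eq_bigr=> k _.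
by rewrite !mxE /h3 /=; isimp.
Qed.

Lemma T6 (Z : 'M[C]_e) : liftE b Z = kronh (@H1 b e) 1%:M Z.
Proof. by apply/matrixP=> i j; rewrite !mxE /H1. Qed.

End Small.


Lemma fpowM p x y : 0 <= x -> 0 <= y -> fpow p (x * y) = fpow p x * fpow p y.
Proof.
move=> x0 y0; rewrite /fpow mulf_eq0.
have [->|xn0] := eqVneq x 0; first by rewrite /= mul0r.
have [->|yn0] := eqVneq y 0; first by rewrite orbT mulr0.
by rewrite /= powRM.
Qed.

Lemma mpow_kron N n1 n2 (h : 'I_N -> 'I_n1 * 'I_n2) p A B :
  bijective h -> nndec A -> nndec B ->
  mpow (kronh h A B) p = kronh h (mpow A p) (mpow B p).
Proof. by move=> bh nA nB; rewrite !mpowE; case: (mfun_kron (f:=fpow p) bh nA nB (@fpowM p)) => ->. Qed.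

Lemma pipeZ_kron dA dB dE dA1 dB1 dE1 alpha
  (M : 'M[C]_(dA * dB * dE)) (N : 'M[C]_(dA1 * dB1 * dE1)) :
  psd M -> psd N ->
  pipeZ alpha (kronh (@H3 dA dA1 dB dB1 dE dE1) M N) =
  kronh (@H2 dB dB1 dE dE1) (pipeZ alpha M) (pipeZ alpha N).
Proof.
move=> pM pN; rewrite /pipeZ; cbv zeta.
have pMAE := psd_ptrB pM; have pNAE := psd_ptrB pN.
have nMAE := psd_nndec pMAE; have nNAE := psd_nndec pNAE.
have nME := psd_nndec (psd_ptrA_AE pMAE); have nNE := psd_nndec (psd_ptrA_AE pNAE).
have nM := psd_nndec pM; have nN := psd_nndec pN.
have b3 := @bij_H3 dA dA1 dB dB1 dE dE1; have b2 := @bij_H2 dB dB1 dE dE1.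
have b2' := @bij_H2 dA dA1 dE dE1; have b1 := @bij_H1 dE dE1.
rewrite B2 mpow_kron // B4 mpow_kron //.
rewrite !kronh_mul // B5.
rewrite B3 mpow_kron // B6.
by rewrite !kronh_mul.
Qed.


Lemma powR3 (x a b c : R) : x != 0 -> x `^ a * x `^ b * x `^ c = x `^ (a + b + c).
Proof.
move=> xn0; have H : forall r s : R, (r + s == 0) ==> (x != 0) by move=> r s; rewrite xn0 implybT.
by rewrite -powRD // -powRD.
Qed.

Lemma fpowF2 (al x : R) : 0 <= x ->
  fpow ((1 - al) / 2) x * fpow al x * fpow ((1 - al) / 2) x = x.
Proof.
move=> x0; rewrite /fpow; have [->|xn0] := eqVneq x 0; first by rewrite !mulr0.
rewrite powR3 // -[RHS](powRr1 x0); congr (_ `^ _).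
by field.
Qed.

Lemma fpowF3 (al x : R) : 0 <= x ->
  fpow ((al - 1) / 2) x * x * fpow ((al - 1) / 2) x = fpow al x.
Proof.
move=> x0; rewrite /fpow; have [->|xn0] := eqVneq x 0; first by rewrite !mulr0.
rewrite -{2}(powRr1 x0) powR3 //; congr (_ `^ _).
by field.
Qed.

Lemma fpowF4 (al x : R) : al != 0 -> 0 <= x -> fpow al^-1 (fpow al x) = x.
Proof.
move=> al0 x0; rewrite /fpow; have [->|xn0] := eqVneq x 0; first by rewrite eqxx.
rewrite powR_eq0 (negbTE xn0) /= -powRrM mulfV // powRr1 //.
Qed.

Lemma mfun3 n f g k (M : 'M[C]_n) U d : spectral_dec M (U, d) ->
  mfun f M *m mfun g M *m mfun k M = mfun (fun x => f x * g x * k x) M.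
Proof. by move=> H; rewrite (mfun_mul _ _ H) (mfun_mul _ _ H). Qed.

Lemma nndec_kron N n1 n2 (h : 'I_N -> 'I_n1 * 'I_n2) A B :
  bijective h -> nndec A -> nndec B -> nndec (kronh h A B).
Proof. by move=> bh nA nB; case: (mfun_kron (f:=id) bh nA nB (fun x y _ _ => erefl)). Qed.


Lemma theta_tr a b e alpha (S : 'M[C]_a) (T : 'M[C]_b) (G : 'M[C]_e) :
  0 < alpha -> is_state S -> is_state T -> is_state G ->
  \tr (mpow (pipeZ alpha (prod3 S T G)) alpha^-1) = 1.
Proof.
move=> al0 [pS tS] [pT tT] [pG tG].
have al0' : alpha != 0 by rewrite gt_eqF.
have nS := psd_nndec pS; have nT := psd_nndec pT; have nG := psd_nndec pG.
have [US [dS [HS dS0]]] := nS; have [UT [dT [HT dT0]]] := nT.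
have [UG [dG [HG dG0]]] := nG.
have b1 := @bij_H1 a e; have b1' := @bij_H1 b e; have bh := @bij_h3 a b e.
rewrite /pipeZ; cbv zeta.
rewrite T1 // T2 // mpow_kron // T4 T3 mpow_kron //; last exact: nndec_kron.
rewrite mpow_kron //.
rewrite !kronh_mul // T5 T6.
have ES : mfun (fpow ((1 - alpha) / 2)) S *m mfun (fpow alpha) S *m mfun (fpow ((1 - alpha) / 2)) S = S.
  rewrite (mfun3 _ _ _ HS) (mfun_ext (g := id) HS); first exact: (mfun_id HS).
  by move=> i; exact: fpowF2 (dS0 i).
have EG : mfun (fpow ((1 - alpha) / 2)) G *m mfun (fpow alpha) G *m mfun (fpow ((1 - alpha) / 2)) G = G.
  rewrite (mfun3 _ _ _ HG) (mfun_ext (g := id) HG); first exact: (mfun_id HG).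
  by move=> i; exact: fpowF2 (dG0 i).
have EG3 : mfun (fpow ((alpha - 1) / 2)) G *m G *m mfun (fpow ((alpha - 1) / 2)) G = mfun (fpow alpha) G.
  rewrite -{2}(mfun_id HG) (mfun3 _ _ _ HG) (mfun_ext (g := fpow alpha) HG) //.
  by move=> i; exact: fpowF3 (dG0 i).
rewrite !mpowE ES EG tS scale1r mul1mx mulmx1 !kronh_mul // mul1mx mulmx1 EG3.
have nTa := nndec_mfun (fun x _ => fpow_ge0 alpha x) nT; have nGa := nndec_mfun (fun x _ => fpow_ge0 alpha x) nG.
rewrite -mpowE mpow_kron // !mpowE tr_kronh //.
have ET : forall n (M : 'M[C]_n) U d, spectral_dec M (U, d) -> (forall i, 0 <= d 0 i) ->
    mfun (fpow alpha^-1) (mfun (fpow alpha) M) = M.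
  move=> n M U d H d0; rewrite (mfun_comp _ _ H) (mfun_ext (g := id) H); first exact: (mfun_id H).
  by move=> i; exact: fpowF4 al0' (d0 i).
by rewrite (ET _ _ _ _ HT dT0) (ET _ _ _ _ HG dG0) tT tG mulr1.
Qed.

End L.

Theorem lemma2 (R : realType) (alpha : R) (dA dB dE dA1 dB1 dE1 : nat)
  (omega : 'M[R[i]]_(dA * dB * dE)) (sigma : 'M[R[i]]_dA1)
  (tau : 'M[R[i]]_dB1) (gamma : 'M[R[i]]_dE1) :
  0 < alpha -> alpha != 1 ->
  is_state omega -> is_state sigma -> is_state tau -> is_state gamma ->
  renyi_cmi alpha (prod_state omega sigma tau gamma) = renyi_cmi alpha omega.
Proof.
move=> al0 al1 [pW tW] sS sT sG.
have pTh : psd (prod3 sigma tau gamma).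
  case: sS sT sG => [pS _] [pT _] [pG _].
  rewrite T3; apply: nndec_psd; apply: nndec_kron; first exact: bij_h3.
    exact: psd_nndec.
  by apply: nndec_kron; [exact: bij_H1|exact: psd_nndec|exact: psd_nndec].
rewrite !renyiE B1 pipeZ_kron //.
rewrite mpow_kron; [|exact: bij_H2|exact: psd_nndec (psd_pipeZ _ _)|exact: psd_nndec (psd_pipeZ _ _)].
rewrite tr_kronh; last exact: bij_H2.
by rewrite (theta_tr al0 sS sT sG) mulr1.
Qed.
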